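(* Let $d,n\in\mathbb{N}$, $\mathbb{Z}_+=\{0,1,\ldots\}$, $\|x\|_\infty=\max_i|x_i|$, $x\sim y$ iff $|x-y|=1$ (Euclidean norm). Define $u_n:\mathbb{Z}_+^d\to\mathbb{R}$ by $u_n(x)=1$ if $\|x\|_\infty\le n$ and $u_n(x)=0$ otherwise. Then for $t>0$ and $0<p<\infty$, \[\sum_{j\in\mathbb{Z}_+^d\setminus\{0\}}\frac{|u_n(j)|^p}{\|j\|_\infty^t}\ge\begin{cases}\frac{d}{d-t}n^{d-t},&\text{if }d-t\ge1,\\ \frac{d}{|d-t|}\,|(n+1)^{d-t}-1|,&\text{if }d-t<1,\ d-t\ne0,\\ d\ln(n+1),&\text{if }d-t=0,\end{cases}\] and \[\sum_{x\in\mathbb{Z}_+^d}\ \sum_{\substack{y\in\mathbb{Z}_+^d\\ y\sim x}}|u_n(x)-u_n(y)|^p\le\begin{cases}2dn^{d-1}+2^{d+1}dn^{d-2},&\text{if }d\ge2,\\ 2dn^{d-1},&\text{if }d=1.\end{cases}\] *)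

(* Defs.v *)
From HB Require Import structures.
From mathcomp Require Import all_boot all_order all_algebra.
From mathcomp Require Import all_classical all_reals all_analysis.
Set Implicit Arguments. Unset Strict Implicit. Unset Printing Implicit Defensive.
Import Order.TTheory GRing.Theory Num.Theory.
Local Open Scope ring_scope.

Definition pt (d : nat) := {ffun 'I_d -> nat}.

(* ||x||_oo = max_i |x_i| (coordinates are nonnegative). *)
Definition normInf (d : nat) (x : pt d) : nat := (\max_(i < d) x i)%N.

Definition eucl_dist (R : realType) (d : nat) (x y : pt d) : R :=
  Num.sqrt (\sum_(i < d) ((x i)%:R - (y i)%:R) ^+ 2).

Definition adj (R : realType) (d : nat) (x y : pt d) : Prop :=
  eucl_dist R x y = 1.

Definition u_ (R : realType) (d n : nat) (x : pt d) : R :=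
  if (normInf x <= n)%N then 1 else 0.

(* Main.v *)
Require Import Defs.
From HB Require Import structures.
From mathcomp Require Import all_boot all_order all_algebra.
From mathcomp Require Import all_classical all_reals all_analysis.
From mathcomp Require Import zify ring lra.
Import Order.TTheory GRing.Theory Num.Theory.

Lemma foldr_muln_prod (T : finType) (f : T -> nat) :
  foldr muln 1 [seq f x | x : T] = \prod_(x : T) f x.
Proof. by rewrite foldrE big_map enumT. Qed.

Lemma card_family_prod (aT rT : finType) (F : aT -> pred rT) :
  #|(family F : simpl_pred {ffun aT -> rT})| = \prod_(x : aT) #|F x|.
Proof. by rewrite card_family foldr_muln_prod. Qed.

Lemma card_ord_le (N m : nat) : m < N -> #|[pred v : 'I_N | v <= m]| = m.+1.
Proof.
move=> mN.
have wi : injective (@widen_ord m.+1 N mN) by move=> a b H; apply: val_inj; move/(congr1 val): H.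
rewrite -[in RHS](card_ord m.+1) -(fintype.card_image wi).
apply: eq_card => v; rewrite inE; apply/idP/fintype.imageP => [vm|[w _ ->]].
  by exists (Ordinal (vm : v < m.+1)) => //; apply: val_inj.
by rewrite /= -ltnS.
Qed.

Lemma card_ord_eq (N v : nat) : v < N -> #|[pred w : 'I_N | w == v :> nat]| = 1.
Proof.
move=> vN; rewrite -(card1 (Ordinal vN)); apply: eq_card => w.
by rewrite !inE.
Qed.

Lemma card_maxle (d N k : nat) : k < N ->
  #|[pred g : {ffun 'I_d -> 'I_N} | (\max_(i < d) val (g i) <= k)%N]| = k.+1 ^ d.
Proof.
move=> kN.
have -> : k.+1 ^ d = #|(family (fun _ : 'I_d => [pred v : 'I_N | v <= k]) : simpl_pred {ffun 'I_d -> 'I_N})|.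
  rewrite card_family_prod (eq_bigr (fun _ => k.+1)); last by move=> i _; rewrite card_ord_le.
  by rewrite prod_nat_const card_ord.
apply: eq_card => g; rewrite !inE; apply/bigmax_leqP/familyP => H i.
  by have := H i isT.
by move=> _; have := H i.
Qed.

Lemma card_face (d N : nat) (i : 'I_d) (v m : nat) : v < N -> m < N ->
  #|[pred g : {ffun 'I_d -> 'I_N} | (g i == v :> nat) && [forall j, (j != i) ==> (g j <= m)]]|
   = m.+1 ^ d.-1.
Proof.
move=> vN mN.
have -> : m.+1 ^ d.-1 = #|(family (fun j : 'I_d => if j == i then [pred w : 'I_N | w == v :> nat] else [pred w : 'I_N | w <= m])
   : simpl_pred {ffun 'I_d -> 'I_N})|.
  rewrite card_family_prod (bigD1 i) //= eqxx card_ord_eq // mul1n.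
  rewrite (eq_bigr (fun _ => m.+1)); last by move=> j /negPf ->; rewrite card_ord_le.
  by rewrite prod_nat_const cardC1 card_ord.
apply: eq_card => g; rewrite !inE; apply/andP/familyP => [[gi /forallP H] j|H].
  by case: eqP => [->|/eqP ji]; rewrite inE //; have := H j; rewrite ji.
split; first by have := H i; rewrite eqxx inE.
apply/forallP => j; apply/implyP => ji; have := H j; by rewrite (negPf ji) inE.
Qed.

Lemma pow_succ_ge (k d : nat) : k ^ d.+1 + d.+1 * k ^ d <= k.+1 ^ d.+1.
Proof.
elim: d => [|d IH]; first by rewrite !expn1 !expn0; lia.
rewrite [k ^ d.+2]expnS [k ^ d.+1]expnS [k.+1 ^ d.+2]expnS.
move: IH; rewrite [k ^ d.+1]expnS; set A := k ^ d; set B := k.+1 ^ d.+1 => IH.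
nia.
Qed.

Lemma pow_succ_le (n m : nat) : 1 <= n ->
  (n.+1) ^ m.+1 + n ^ m <= n ^ m.+1 + (2 ^ m.+1) * n ^ m.
Proof.
move=> n1; elim: m => [|m IH]; first by rewrite !expn1 !expn0; lia.
rewrite [n ^ m.+2]expnS [n.+1 ^ m.+2]expnS [2 ^ m.+2]expnS [n ^ m.+1]expnS.
move: IH; rewrite [n ^ m.+1]expnS; set A := n ^ m; set B := n.+1 ^ m.+1; set C := 2 ^ m.+1 => IH.
have C1 : 1 <= C by rewrite expn_gt0.
have A1 : 1 <= A by rewrite expn_gt0; lia.
have h1 := leq_mul (leqnn n.+1) IH.
have h2 : C + n <= C * n + 1 by nia.
have h3 := leq_mul h2 (leqnn A).
nia.
Qed.

Lemma sum_sq1 (d : nat) (D : 'I_d -> nat) : (\sum_i D i ^ 2 = 1)%N ->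
  exists i, D i = 1%N /\ forall j, j != i -> D j = 0%N.
Proof.
move=> S.
have : ~~ [forall i, D i ^ 2 == 0%N].
  by move: (sum_nat_eq0 predT (fun i => D i ^ 2)); rewrite S => <-.
case/forallPn => i Di.
have := S; rewrite (bigD1 i) //= => S'.
have Di1 : D i = 1%N by move: Di S'; set s := (\sum_(j | j != i) _)%N; nia.
exists i; split => // j ji.
have : (\sum_(j | j != i) D j ^ 2 == 0)%N.
  by move: S'; rewrite Di1 exp1n => /eqP; rewrite -{2}[1%N]addn0 eqn_add2l.
rewrite sum_nat_eq0 => /forallP /(_ j); rewrite ji /=.
by move=> /eqP; lia.
Qed.

Local Open Scope ring_scope.


Import numFieldNormedType.Exports.
Local Open Scope ring_scope.
Local Open Scope classical_set_scope.

Section H.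
Variable R : realType.
Local Open Scope ereal_scope.

Lemma esum_finT (F : finType) (f : F -> \bar R) :
  (forall k, 0 <= f k) -> \esum_(k in [set: F]) f k = \sum_(k : F) f k.
Proof.
move=> f0; rewrite esum_fset; last 2 first.
- exact: finite_finset.
- by move=> i _; exact: f0.
rewrite (fsbigE (enum F)) ?enum_uniq//=.
  by under eq_bigl do rewrite in_setT; rewrite big_enum.
by move=> i _; rewrite mem_enum.
Qed.

Lemma esum_le_fin (T : choiceType) (F : finType) (e : F -> T) (D : set T)
  (a : T -> \bar R) : injective e -> (forall x, 0 <= a x) ->
  (forall x, D x -> a x != 0 -> exists k, e k = x) ->
  \esum_(x in D) a x <= \sum_(k : F) a (e k).
Proof.
move=> ei a0 sup.
apply: (@le_trans _ _ (\esum_(x in range e) a x)).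
  rewrite esum_mkcond [leRHS]esum_mkcond; apply: le_esum => x _.
  case: ifPn => xD; case: ifPn => // /negP xr.
  have := a0 x; rewrite le_eqVlt => /orP[/eqP <- //|].
  rewrite lt0e => /andP[ax _]; case: (sup x (set_mem xD) ax) => k ek.
  by exfalso; apply: xr; rewrite inE; exists k.
rewrite (esum_image [set: F] e a); last by move=> x y _ _ /ei.
by rewrite esum_finT.
Qed.

Lemma esum_ge_fin (T : choiceType) (F : finType) (e : F -> T) (D : set T)
  (P : pred F) (a : T -> \bar R) : injective e -> (forall x, 0 <= a x) ->
  (forall k, P k -> D (e k)) ->
  \sum_(k | P k) a (e k) <= \esum_(x in D) a x.
Proof.
move=> ei a0 PD.
apply: (@le_trans _ _ (\esum_(x in e @` [set k | P k]) a x)); last first.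
  rewrite [leRHS]esum_mkcond [leLHS]esum_mkcond; apply: le_esum => x _.
  case: ifPn => //; case: ifPn => // /negP xD; rewrite inE => -[k Pk ek].
  by exfalso; apply: xD; rewrite inE -ek; exact: PD.
rewrite (esum_image [set k | P k] e a); last by move=> x y _ _ /ei.
rewrite esum_mkcond esum_finT; last by move=> k; case: ifP.
rewrite big_mkcond; apply: lee_sum => k _.
have -> : (k \in [set k | P k]) = P k by apply/idP/idP; rewrite inE.
by case: ifP.
Qed.
Lemma esum_le_fin' (T : choiceType) (F : finType) (e : F -> T) (D : set T)
  (a : T -> \bar R) : (forall x, 0 <= a x) ->
  (forall x, D x -> a x != 0 -> exists k, e k = x) ->
  \esum_(x in D) a x <= \sum_(k : F) a (e k).
Proof.
move=> a0 sup.
pose r y := [pick k | e k == y].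
pose K := [set k | r (e k) == Some k].
have Kinj : set_inj K e.
  move=> k1 k2; rewrite /K !inE /= => K1 K2 ek.
  have : Some k1 = Some k2 by rewrite -(eqP K1) -(eqP K2) ek.
  by case.
have rk k : exists k', r (e k) = Some k' /\ e k' = e k.
  rewrite /r; case: pickP => [k' /eqP ek' | /(_ k)]; first by exists k'.
  by rewrite eqxx.
have img : range e = e @` K.
  apply/seteqP; split => y [k _ <-]; last by exists k.
  have [k' [rk' ek']] := rk k; exists k' => //.
  by rewrite /K /= ek' rk'.
apply: (@le_trans _ _ (\esum_(x in range e) a x)).
  rewrite esum_mkcond [leRHS]esum_mkcond; apply: le_esum => x _.
  case: ifPn => xD; case: ifPn => // /negP xr.
  have := a0 x; rewrite le_eqVlt => /orP[/eqP <- //|].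
  rewrite lt0e => /andP[ax _]; case: (sup x (set_mem xD) ax) => k ek.
  by exfalso; apply: xr; rewrite inE; exists k.
rewrite img (esum_image K e a Kinj) esum_mkcond esum_finT; last by move=> k; case: ifP.
by apply: lee_sum => k _; case: ifP.
Qed.
End H.


Section An.
Variable R : realType.

Lemma mvt_powR (s a b : R) : 0 < a -> a < b ->
  exists2 c, a < c < b & b `^ s - a `^ s = s * c `^ (s - 1) * (b - a).
Proof.
move=> a0 ab.
have H1 : forall x, x \in `]a, b[%R -> is_derive x 1 (fun x : R => powR x s) (s * powR x (s - 1)).
  move=> x; rewrite in_itv /= => /andP[ax _].
  exact: (is_derive1_powR s (lt_trans a0 ax)).
have H2 : {within `[a, b], continuous (fun x : R => powR x s)}.
  have dF : {in `[a, b]%R, forall x, derivable (fun x : R => powR x s) x 1}.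
    move=> x; rewrite in_itv /= => /andP[ax _].
    by apply: derivable_powR; rewrite in_itv /= andbT; exact: lt_le_trans ax.
  exact: (derivable_within_continuous dF).
have [c cab ->] := @MVT R (fun x : R => powR x s) (fun x : R => s * powR x (s - 1)) a b ab H1 H2.
by exists c => //; move: cab; rewrite in_itv.
Qed.

Lemma step1 (s : R) (k : nat) : 1 <= s ->
  k.+1%:R `^ s - k%:R `^ s <= s * k.+1%:R `^ (s - 1).
Proof.
move=> s1; have s0 : 0 < s by exact: lt_le_trans s1.
case: k => [|k].
  rewrite mulr1n powR0 ?subr0 ?gt_eqF //.
  by rewrite !(powR1 _) /= mulr1.
have lt12 : k.+1%:R < k.+2%:R :> R by rewrite ltr_nat.
have [c /andP[c1 c2] ->] := mvt_powR s _ _ (ltr0Sn R k) lt12.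
rewrite -natrB // subSnn mulr1 ler_wpM2l ?(ltW s0) //.
apply: ge0_ler_powR; rewrite ?subr_ge0 // ?nnegrE ?ler0n //.
- exact: ltW (lt_trans (ltr0Sn R k) c1).
- exact: ltW.
Qed.

Lemma powR_decr (r a b : R) : r <= 0 -> 0 < a -> a <= b -> b `^ r <= a `^ r.
Proof.
move=> r0 a0 ab; have b0 : 0 < b by exact: lt_le_trans ab.
have E x : x `^ r = (x `^ (- r))^-1 by rewrite powRN invrK.
rewrite (E b) (E a) lef_pV2 ?posrE ?powR_gt0 //.
by apply: ge0_ler_powR; rewrite ?oppr_ge0 ?nnegrE // ltW.
Qed.

Lemma step2 (s : R) (k : nat) : s != 0 -> s < 1 -> (0 < k)%N ->
  0 <= (k.+1%:R `^ s - k%:R `^ s) / s <= k%:R `^ (s - 1).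
Proof.
move=> s0 s1 k0.
have lt12 : k%:R < k.+1%:R :> R by rewrite ltr_nat.
have kp : 0 < k%:R :> R by rewrite ltr0n.
have [c /andP[c1 c2] ->] := mvt_powR s _ _ kp lt12.
rewrite -natrB // subSnn mulr1 mulrAC mulfV // mul1r powR_ge0 /=.
by apply: powR_decr; rewrite ?subr_le0 // ltW.
Qed.

Lemma step3 (k : nat) : (0 < k)%N -> ln k.+1%:R - ln k%:R <= (k%:R)^-1 :> R.
Proof.
move=> k0; have kp : 0 < k%:R :> R by rewrite ltr0n.
rewrite -ln_div ?posrE ?ltr0n //.
have -> : k.+1%:R / k%:R = 1 + (k%:R)^-1 :> R.
  by rewrite -[k.+1]addn1 natrD mulrDl divff ?gt_eqF // mul1r addrC.
apply: le_ln1Dx; apply: lt_le_trans (ltrN10 R) _; rewrite invr_ge0 ltW //.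
Qed.

Definition Asum (n : nat) (s : R) := \sum_(1 <= k < n.+1) k%:R `^ (s - 1).

Lemma sum_b1 (n : nat) (s : R) : 1 <= s -> n%:R `^ s / s <= Asum n s.
Proof.
move=> s1; have s0 : 0 < s by exact: lt_le_trans s1.
rewrite ler_pdivrMr // /Asum big_add1 /= mulr_suml.
have := telescope_sumr (fun k => k%:R `^ s : R) (leq0n n).
rewrite powR0 ?gt_eqF // subr0 => <-.
by apply: ler_sum => k _; rewrite mulrC step1.
Qed.

Lemma sum_b2 (n : nat) (s : R) : s != 0 -> s < 1 ->
  `|n.+1%:R `^ s - 1| / `|s| <= Asum n s.
Proof.
move=> s0 s1.
have tel := telescope_sumr (fun k => k%:R `^ s : R) (ltn0Sn n).
rewrite /= powR1 in tel.
have E : (n.+1%:R `^ s - 1) / s = \sum_(1 <= k < n.+1) (k.+1%:R `^ s - k%:R `^ s) / s.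
  by rewrite -mulr_suml tel.
have X0 : 0 <= (n.+1%:R `^ s - 1) / s.
  rewrite E big_nat_cond; apply: sumr_ge0 => k /andP[/andP[k0 _] _].
  by case/andP: (step2 s k s0 s1 k0).
rewrite -normf_div ger0_norm // E /Asum; apply: ler_sum_nat => k /andP[k0 _].
by case/andP: (step2 s k s0 s1 k0).
Qed.

Lemma sum_b3 (n : nat) : ln n.+1%:R <= Asum n 0.
Proof.
have tel := telescope_sumr (fun k => ln k%:R : R) (ltn0Sn n).
rewrite /= ln1 subr0 in tel; rewrite -tel /Asum; apply: ler_sum_nat => k /andP[k0 _].
by rewrite sub0r powR_inv1 ?ler0n // step3.
Qed.

End An.
Arguments Asum {R}.


Section C.
Variable R : realType.

Lemma count_sum (d n : nat) (t : R) : (1 <= d)%N ->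
  d%:R * Asum n (d%:R - t) <=
  \sum_(g : {ffun 'I_d -> 'I_n.+1} | (0 < \max_(i < d) val (g i))%N)
     ((\max_(i < d) val (g i))%:R `^ t)^-1.
Proof.
case: d => [//|d] _.
set m := fun g : {ffun 'I_d.+1 -> 'I_n.+1} => \max_(i < d.+1) val (g i).
have mle g : (m g <= n)%N.
  by rewrite /m; apply/bigmax_leqP => i _; rewrite -ltnS ltn_ord.
pose mo g : 'I_n.+1 := inord (m g).
have moE g (j : 'I_n.+1) : (mo g == j) = (m g == j :> nat).
  by rewrite -val_eqE /= inordK // ltnS mle.
rewrite (partition_big mo (fun j : 'I_n.+1 => (0 < j)%N)) /=; last first.
  by move=> g; rewrite inordK // ltnS mle.
have -> : d.+1%:R * Asum n (d.+1%:R - t) =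
   \sum_(j < n.+1 | (0 < j)%N) d.+1%:R * j%:R `^ (d%:R - t).
  rewrite /Asum mulr_sumr big_add1 /= big_mkord [RHS]big_mkcond big_ord_recl /= add0r.
  apply: eq_bigr => i _.
  have -> : d.+1%:R - t - 1 = d%:R - t :> R by rewrite -addn1 natrD; lra.
  by rewrite /bump /= add1n.
apply: ler_sum => j j0.
have -> : \sum_(g | (0 < m g)%N && (mo g == j)) ((m g)%:R `^ t)^-1 =
          \sum_(g in [pred g | m g == j :> nat]) ((j : nat)%:R `^ t)^-1 :> R.
  apply: eq_big => g; first by rewrite moE inE; case: (m g =P j) => [->|_]; rewrite ?j0 ?andbF.
  by rewrite moE => /andP[_ /eqP ->].
rewrite sumr_const.
have card_ge : (d.+1 * j ^ d <= #|[pred g : {ffun 'I_d.+1 -> 'I_n.+1} | m g == j :> nat]|)%N.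
  have c1 := card_maxle d.+1 n.+1 j (ltn_ord j).
  have jp : (j.-1 < n.+1)%N by apply: leq_ltn_trans (leq_pred _) (ltn_ord j).
  have c2 := card_maxle d.+1 n.+1 j.-1 jp.
  rewrite prednK // in c2.
  set A := [pred g : {ffun 'I_d.+1 -> 'I_n.+1} | (m g <= j)%N].
  set B := [pred g : {ffun 'I_d.+1 -> 'I_n.+1} | (m g <= j.-1)%N].
  have := cardID B A.
  have -> : #|[predI A & B]| = #|B|.
    apply: eq_card => g; rewrite !inE; apply/andP/idP => [[]//|h]; split => //.
    exact: leq_trans h (leq_pred _).
  have -> : #|[predD A & B]| = #|[pred g | m g == j :> nat]|.
    apply: eq_card => g; rewrite !inE; apply/andP/eqP => [[]|->]; last by rewrite leqnn -ltnS prednK // ltnn.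
    by rewrite -ltnNge prednK // => h1 h2; apply/eqP; rewrite eqn_leq h2.
  rewrite c2 c1 => e.
  have := pow_succ_ge j d; lia.
have w0 : 0 <= ((j : nat)%:R `^ t)^-1 :> R by rewrite invr_ge0 powR_ge0.
apply: (@le_trans _ _ (((j:nat)%:R `^ t)^-1 * (d.+1 * j ^ d)%:R)); last first.
  by rewrite -[_ *+ #|_|]mulr_natr ler_wpM2l // ler_nat.
have jp : 0 < (j : nat)%:R :> R by rewrite ltr0n.
rewrite natrM natrX -powR_mulrn ?ler0n // powRD; last by rewrite (gt_eqF jp) implybT.
by rewrite powRN [leRHS]mulrC mulrA.
Qed.

End C.

Definition nb (d : nat) (x : pt d) (k : 'I_d * bool) : pt d :=
  [ffun j => if j == k.1 then (if k.2 then (x j).+1 else (x j).-1) else x j].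

Arguments nb {d}.

Lemma sqr_natB (R : realType) (a b : nat) :
  ((a%:R - b%:R) ^+ 2 : R) = (((a - b) + (b - a)) ^ 2)%:R.
Proof.
case: (leqP a b) => h.
  have -> : (a - b = 0)%N by lia.
  by rewrite add0n natrX natrB // -sqrrN opprB.
have -> : (b - a = 0)%N by lia.
by rewrite addn0 natrX natrB // ltnW.
Qed.

Lemma adj_nb (R : realType) (d : nat) (x y : pt d) : adj R x y -> exists k, nb x k = y.
Proof.
rewrite /adj /eucl_dist => H.
set S := \sum_(i < d) _ in H.
have S0 : 0 <= S by apply: sumr_ge0 => i _; exact: sqr_ge0.
have S1 : S = 1 by rewrite -(sqr_sqrtr S0) H expr1n.
have : (\sum_(i < d) (((x i - y i) + (y i - x i)) ^ 2)%N)%N = 1%N :> nat.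
  apply/eqP; rewrite -(eqr_nat R) natr_sum mulr1n; apply/eqP.
  transitivity S; last exact: S1.
  by apply: eq_bigr => i _; rewrite sqr_natB.
case/sum_sq1 => i [Di Dj].
have xy j : j != i -> x j = y j by move=> /Dj; lia.
have [yi|yi] : (y i = (x i).+1 \/ x i = (y i).+1)%N by lia.
  exists (i, true); apply/ffunP => j; rewrite ffunE /=.
  by case: eqP => [->//|/eqP ji]; rewrite xy.
exists (i, false); apply/ffunP => j; rewrite ffunE /=.
by case: eqP => [->|/eqP ji]; [rewrite yi | rewrite xy].
Qed.


Lemma uE (R : realType) (d n : nat) (z : pt d) :
  u_ R n z = (if [forall j, (z j <= n)%N] then 1 else 0).
Proof.
rewrite /u_ /normInf; congr (if _ then _ else _).
by apply/bigmax_leqP/forallP => H j //; apply: H.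
Qed.

Lemma c_bound (R : realType) (d n : nat) (p : R) (x : pt d) (i : 'I_d) (s : bool) : 0 < p ->
  `|u_ R n x - u_ R n (nb x (i, s))| `^ p <=
  ((x i == (if s then n else n.+1)) && [forall j, (j != i) ==> (x j <= n)%N])%:R.
Proof.
move=> p0; rewrite !uE.
set x' := nb x (i, s).
have x'j j : j != i -> x' j = x j by move=> ji; rewrite /x' ffunE /= (negPf ji).
have x'i : x' i = if s then (x i).+1 else (x i).-1 by rewrite /x' ffunE eqxx.
case: (boolP [forall j, (x j <= n)%N]) => Px; case: (boolP [forall j, (x' j <= n)%N]) => Px';
  try by rewrite subrr normr0 powR0 ?ler0n // lt0r_neq0.
- rewrite subr0 normr1 powR1.
  case/forallPn: Px' => j; have := forallP Px j.
  have [->|ji] := eqVneq j i; last by rewrite x'j // => ->.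
  rewrite x'i; clearbody x'; case: s {x'i} => xi xi'; last by lia.
  have -> : x i = n by lia.
  rewrite eqxx /=; suff -> : [forall j0, (j0 != i) ==> (x j0 <= n)%N] by [].
  apply/forallP => k; apply/implyP => _; exact: (forallP Px k).
- rewrite sub0r normrN normr1 powR1.
  case/forallPn: Px => j; have := forallP Px' j.
  have [->|ji] := eqVneq j i; last by rewrite x'j // => ->.
  rewrite x'i; clearbody x'; case: s {x'i} => xi xi'; first by lia.
  have -> : x i = n.+1 by lia.
  rewrite eqxx /=; suff -> : [forall j0, (j0 != i) ==> (x j0 <= n)%N] by [].
  apply/forallP => k; apply/implyP => ki.
  by rewrite -x'j //; exact: (forallP Px' k).
Qed.

Section RH.
Variable R : realType.
Local Open Scope ereal_scope.

Lemma RHS_le (d n : nat) (p : R) : (0 < p)%R ->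
  \esum_(x in [set: pt d]) \esum_(y in [set y : pt d | adj R x y])
     (`|u_ R n x - u_ R n y| `^ p)%:E <= ((2 * d * (n.+1) ^ d.-1)%N%:R)%:E.
Proof.
move=> p0.
pose c x (k : 'I_d * bool) := (`|u_ R n x - u_ R n (nb x k)| `^ p)%:E.
apply: (@le_trans _ _ (\esum_(x in [set: pt d]) \sum_(k : 'I_d * bool) c x k)).
  apply: le_esum => x _.
  apply: (@esum_le_fin' R _ _ (nb x)).
    by move=> y; rewrite lee_fin powR_ge0.
  by move=> y Dy _; exact: adj_nb Dy.
rewrite esum_sum; last by move=> *; rewrite lee_fin powR_ge0.
apply: (@le_trans _ _ (\sum_(k : 'I_d * bool) ((n.+1 ^ d.-1)%N%:R)%:E)).
  apply: lee_sum => -[i s] _.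
  pose E (g : {ffun 'I_d -> 'I_n.+2}) : pt d := [ffun j => val (g j)].
  have Ei : injective E.
    move=> g h /ffunP H; apply/ffunP => j; apply/val_inj; have := H j; rewrite !ffunE.
    by [].
  have vlt : ((if s then n else n.+1) < n.+2)%N by case: s.
  set v := if s then n else n.+1 in vlt.
  have cb x := @c_bound R d n p x i s p0.
  apply: (le_trans (@esum_le_fin' R _ _ E _ (fun x => c x (i, s)) _ _)).
  - by move=> x; rewrite lee_fin powR_ge0.
  - move=> x _ cx.
    have H : ((x i == v) && [forall j, (j != i) ==> (x j <= n)%N]).
      apply/negPn/negP => /negbTE H; move: (cb x); rewrite -/v H /= => c0.
      move: cx; rewrite /c; suff -> : (`|u_ R n x - u_ R n (nb x (i, s))| `^ p)%R = 0%R by rewrite eqxx.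
      by apply/eqP; rewrite eq_le c0 powR_ge0.
    case/andP: H => /eqP xi /forallP xj.
    have xle j : (x j < n.+2)%N.
      have [->|ji] := eqVneq j i; first by rewrite xi.
      by have := xj j; rewrite ji /= => h; apply: leq_trans h _.
    by exists [ffun j => inord (x j)]; apply/ffunP => j; rewrite !ffunE /= inordK.
  rewrite /c sumEFin lee_fin.
  apply: (@le_trans _ _ (\sum_(g : {ffun 'I_d -> 'I_n.+2})
       ((val (g i) == v) && [forall j, (j != i) ==> (val (g j) <= n)%N])%:R)%R).
    apply: ler_sum => g _; apply: le_trans (cb (E g)) _.
    rewrite /E !ffunE -/v.
    have -> : [forall j, (j != i) ==> ([ffun j0 => val (g j0)] j <= n)%N] =
              [forall j, (j != i) ==> (val (g j) <= n)%N].
      by apply: eq_forallb => j; rewrite ffunE.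
    by [].
  rewrite (eq_bigr (fun g => if g \in [pred g : {ffun 'I_d -> 'I_n.+2} | (val (g i) == v) && [forall j, (j != i) ==> (val (g j) <= n)%N]] then 1%R else 0%R)); last first.
    by move=> g _; rewrite inE; case: (_ && _).
  rewrite -big_mkcond /= sumr_const card_face //.
rewrite sumEFin lee_fin (eq_bigl (fun k => k \in predT)) // sumr_const.
rewrite card_prod card_ord card_bool -[(_ *+ (d * 2)%N)%R]mulr_natr -natrM ler_nat; lia.
Qed.
End RH.


Section M.
Variable R : realType.

Lemma LHS_ge (d n : nat) (t p : R) : (1 <= d)%N -> 0 < p ->
  ((d%:R * Asum n (d%:R - t))%:E <=
   \esum_(j in [set j : pt d | j != [ffun=> 0%N]])
               ((`|u_ R n j| `^ p) / ((normInf j)%:R `^ t))%:E)%E.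
Proof.
move=> d1 p0.
pose E (g : {ffun 'I_d -> 'I_n.+1}) : pt d := [ffun i => val (g i)].
have Ei : injective E.
  move=> g h /ffunP H; apply/ffunP => i; apply/val_inj; have := H i; rewrite !ffunE.
  by [].
have nE g : normInf (E g) = (\max_(i < d) val (g i))%N.
  by rewrite /normInf; apply: eq_bigr => i _; rewrite ffunE.
have a0 (x : pt d) : (0 <= ((`|u_ R n x| `^ p) / ((normInf x)%:R `^ t))%:E)%E.
  by rewrite lee_fin divr_ge0 // powR_ge0.
have PD (g : {ffun 'I_d -> 'I_n.+1}) : (0 < \max_(i < d) val (g i))%N -> [set j : pt d | j != [ffun=> 0%N]] (E g).
  move=> h; rewrite /= ; apply/eqP => E0; move: h; rewrite -nE E0 /normInf.
  by rewrite big1 // => i _; rewrite ffunE.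
apply: le_trans (@esum_ge_fin R _ _ E _ _ _ Ei a0 PD).
rewrite sumEFin lee_fin (le_trans (@count_sum R d n t d1)) //.
apply: ler_sum => g _.
have un : u_ R n (E g) = 1.
  rewrite /u_ nE ifT //; apply/bigmax_leqP => i _; rewrite -ltnS; exact: ltn_ord.
by rewrite un normr1 powR1 div1r nE.
Qed.

End M.

Theorem proposition3p1 (R : realType) (d n : nat) (t p : R)
  (hd : (1 <= d)%N) (hn : (1 <= n)%N) (ht : 0 < t) (hp : 0 < p) :
  let LHS := \esum_(j in [set j : pt d | j != [ffun=> 0%N]])
               ((`|u_ R n j| `^ p) / ((normInf j)%:R `^ t))%:E in
  let RHS := \esum_(x in [set: pt d])
               \esum_(y in [set y : pt d | adj R x y])
                 (`|u_ R n x - u_ R n y| `^ p)%:E in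
  (1 <= d%:R - t ->
     (((d%:R / (d%:R - t)) * (n%:R `^ (d%:R - t)))%R%:E <= LHS)%E) /\
  (d%:R - t < 1 -> d%:R - t != 0 ->
     (((d%:R / `|d%:R - t|) * `|(n.+1%:R `^ (d%:R - t)) - 1|)%R%:E <= LHS)%E) /\
  (d%:R - t = 0 -> ((d%:R * ln n.+1%:R)%R%:E <= LHS)%E) /\
  ((2 <= d)%N ->
     (RHS <= (2 * d%:R * n%:R ^+ d.-1
              + 2 ^+ d.+1 * d%:R * n%:R ^+ (d - 2))%R%:E)%E) /\
  (d = 1%N -> (RHS <= (2 * d%:R * n%:R ^+ d.-1)%R%:E)%E).
Proof.
move=> LHS RHS.
have hL := @LHS_ge R d n t p hd hp; rewrite -/LHS in hL.
have hR := @RHS_le R d n p hp; rewrite -/RHS in hR.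
have d0 : (0 <= d%:R :> R) by rewrite ler0n.
split; [|split; [|split; [|split]]].
- move=> s1; apply: (le_trans _ hL); rewrite lee_fin -mulrA ler_wpM2l //.
  by rewrite mulrC; exact: sum_b1.
- move=> s1 s0; apply: (le_trans _ hL); rewrite lee_fin -mulrA ler_wpM2l //.
  by rewrite mulrC; exact: sum_b2.
- move=> s0; apply: (le_trans _ hL); rewrite lee_fin s0 ler_wpM2l //.
  exact: sum_b3.
- move=> d2; apply: (le_trans hR); rewrite lee_fin.
  case: d d2 {hd hL hR LHS RHS d0} => [//|[//|m]] _.
  have := pow_succ_le n m hn.
  rewrite -!natrX -!natrM -natrD ler_nat /=.
  rewrite !expnS; set A := (n.+1 ^ m.+1)%N; set B := (n ^ m)%N; set C := (n ^ m.+1)%N.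
  set D := (2 ^ m)%N; move=> h.
  rewrite subSS subSS subn0 in h *. have := leq_mul (leqnn (2 * m.+2)) h; nia.
- move=> d1; apply: (le_trans hR); rewrite lee_fin d1 /=.
  by rewrite expn0 expr0 !muln1 !mulr1.
Qed.
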